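(* For all integers $n\ge k\ge 2$, $$(\lceil \log (k+1)\rceil+1)\left\lfloor \frac{n}{4k}\right\rfloor \le \gamma_{\rm i}(P_n^k)\le \frac{\lceil \log(k+1)\rceil+2}{2k+2}\,n+\lceil\log(k+1)\rceil+2,$$ where $\log$ is the logarithm of base $2$. In particular, $\gamma_{\rm i}(P_n^k)=\Theta\!\left(\frac{\log k}{k}\,n\right)$ as $n\to\infty$.
   Context: $P_n$ is the path on $n$ vertices. The $k$-th power $G^k$ of a graph $G$ has vertex set $V(G)$, with $uv$ an edge iff $1\le d_G(u,v)\le k$. Indicated domination game on a graph $G$: two players, Dominator and Staller, alternate. In each round Dominator indicates a vertex $v$ not yet dominated by the vertices previously selected by Staller (a vertex dominates itself and its neighbors), and Staller must select a vertex of the closed neighborhood $N[v]$, adding it to a set $D$. The game ends when $D$ is a dominating set of $G$. Dominator wants to minimize $|D|$ and Staller to maximize it; the size of $D$ under optimal play of both is the indicated domination number $\gamma_{\rm i}(G)$. *)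

(* Defs.v *)
From mathcomp Require Import all_boot all_order all_algebra.
Set Implicit Arguments. Unset Strict Implicit. Unset Printing Implicit Defensive.

Section Game.
Variables (T : finType) (adj : rel T).

Definition cnbhd (v : T) : {set T} := [set u | (u == v) || adj v u].

Definition dominated (D : {set T}) (v : T) : bool := [exists u in D, v \in cnbhd u].

Definition dominatingb (D : {set T}) : bool := [forall v, dominated D v].

(* Value of the indicated domination game from position D (the set of vertices
   selected so far by Staller), with [fuel] an upper bound on the number of
   remaining moves: Dominator (min) indicates an undominated vertex v, Staller
   (max) selects u in N[v]; each move adds a new vertex to D, so #|T| fuel is
   always enough. *)
Fixpoint igame (fuel : nat) (D : {set T}) : nat :=
  match fuel with
  | 0 => 0
  | f.+1 =>
      if dominatingb D then 0
      else \big[minn/#|T|]_(v | ~~ dominated D v)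
             \max_(u in cnbhd v) (igame f (u |: D)).+1
  end.

Definition gamma_i : nat := igame #|T| set0.
End Game.

(* k-th power of the path P_n: vertices 0..n-1, distance in P_n is |i - j|,
   so i ~ j iff 1 <= |i - j| <= k. *)
Definition pathpow_adj (n k : nat) : rel 'I_n :=
  fun i j => (0 < (i - j) + (j - i)) && ((i - j) + (j - i) <= k).
Arguments pathpow_adj : clear implicits.
Arguments gamma_i : clear implicits.

(* Main.v *)
Require Import Defs.
From mathcomp Require Import all_boot all_order all_algebra.
From mathcomp Require Import zify ring lra.
Set Implicit Arguments. Unset Strict Implicit. Unset Printing Implicit Defensive.

Section Gen.
Variables (T : finType) (adj : rel T).
Hypothesis adjC : symmetric adj.

Definition G (D : {set T}) := igame adj #|T| D.

Lemma cnbhd_sym u v : (u \in cnbhd adj v) = (v \in cnbhd adj u).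
Proof. by rewrite !inE eq_sym adjC. Qed.

Lemma cnbhd_refl v : v \in cnbhd adj v.
Proof. by rewrite inE eqxx. Qed.

Lemma notin_D (D : {set T}) v u : ~~ dominated adj D v -> u \in cnbhd adj v -> u \notin D.
Proof.
move=> /existsPn nd uv; apply/negP => uD.
by move: (nd u); rewrite uD /= -cnbhd_sym uv.
Qed.

Lemma card_step (D : {set T}) (u : T) : u \notin D -> #|~: D| = (#|~: (u |: D)|).+1.
Proof.
move=> uD.
have h1 := cardsC D; have h2 := cardsC (u |: D).
rewrite cardsU1 uD in h2. lia.
Qed.

Lemma dominating_full (D : {set T}) : #|~: D| = 0 -> dominatingb adj D.
Proof.
move/eqP; rewrite cards_eq0 => /eqP h.
apply/forallP => v; apply/existsP; exists v.
have : v \notin ~: D by rewrite h inE.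
by rewrite inE negbK => ->; rewrite cnbhd_refl.
Qed.

Lemma igame_fuel f1 f2 (D : {set T}) : #|~: D| <= f1 -> #|~: D| <= f2 ->
  igame adj f1 D = igame adj f2 D.
Proof.
elim: f1 f2 D => [|f1 IH] [|f2] D h1 h2 //=.
- by rewrite dominating_full //; lia.
- by rewrite dominating_full //; lia.
case: ifP => // nd.
apply: eq_bigr => v nv; apply: eq_bigr => u uv.
have := card_step (notin_D nv uv) => hc.
by congr S; apply: IH; lia.
Qed.

Lemma min_le (I : finType) (P : pred I) (F : I -> nat) x j :
  P j -> \big[minn/x]_(i | P i) F i <= F j.
Proof.
move=> Pj; have : j \in index_enum I by rewrite mem_index_enum.
elim: (index_enum I) => [|i r IH] //; rewrite big_cons inE.
case/orP => [/eqP <-|jr]; first by rewrite Pj geq_minl.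
case: (P i); last exact: IH.
exact: leq_trans (geq_minr _ _) (IH jr).
Qed.

Lemma igame_le f (D : {set T}) : igame adj f D <= f.
Proof.
elim: f D => [|f IH] D //=.
case: ifP => // /negbT /forallPn [v nv].
apply: (leq_trans (@min_le _ (fun v => ~~ dominated adj D v) _ _ v nv)).
by apply/bigmax_leqP => u _; rewrite ltnS.
Qed.

Lemma G_fuel f (D : {set T}) : #|~: D| <= f -> G D = igame adj f D.
Proof. by move=> h; apply: igame_fuel => //; rewrite -(cardsC D); lia. Qed.

Lemma G_le (D : {set T}) : G D <= #|~: D|.
Proof. by rewrite (G_fuel (leqnn _)) igame_le. Qed.

Lemma G_dom (D : {set T}) : dominatingb adj D -> G D = 0.
Proof. by rewrite /G; case: #|T| => //= f ->. Qed.

Lemma G_rec (D : {set T}) : ~~ dominatingb adj D ->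
  G D = \big[minn/#|T|]_(v | ~~ dominated adj D v)
          \max_(u in cnbhd adj v) (G (u |: D)).+1.
Proof.
move=> nd; have hc : 0 < #|~: D|.
  by rewrite lt0n; apply/negP => /eqP /dominating_full; rewrite (negbTE nd).
have hT : #|~: D| <= #|T| by rewrite -(cardsC D); lia.
rewrite /G; case E: #|T| => [|f]; first lia.
rewrite [LHS]/= (negbTE nd) E; apply: eq_bigr => v nv; apply: eq_bigr => u uv.
have := card_step (notin_D nv uv) => hc'.
by congr S; apply: igame_fuel; lia.
Qed.

Lemma G_up (D : {set T}) v : ~~ dominated adj D v ->
  exists2 u, u \in cnbhd adj v & G D <= (G (u |: D)).+1.
Proof.
move=> nv; have nd : ~~ dominatingb adj D by apply/forallPn; exists v.
rewrite (G_rec nd).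
exists [arg max_(i > v in cnbhd adj v) (G (i |: D)).+1].
  by case: arg_maxnP => //; rewrite cnbhd_refl.
apply: (leq_trans (@min_le _ (fun v => ~~ dominated adj D v) _ _ v nv)).
rewrite (bigmax_eq_arg v) ?cnbhd_refl //.
Qed.

Lemma G_low (D : {set T}) c : ~~ dominatingb adj D ->
  (forall v, ~~ dominated adj D v ->
     exists2 u, u \in cnbhd adj v & c <= (G (u |: D)).+1) -> c <= G D.
Proof.
move=> nd H; rewrite (G_rec nd).
have [v0 nv0] : exists v, ~~ dominated adj D v by apply/forallPn.
have hT : c <= #|T|.
  have [u uv hu] := H v0 nv0.
  have := card_step (notin_D nv0 uv); have := G_le (u |: D).
  have := cardsC D; lia.
elim/big_ind: _ => //; first by move=> x y hx hy; rewrite leq_min hx hy.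
move=> v nv; have [u uv hu] := H v nv.
by apply: leq_trans hu _; apply: leq_bigmax_cond.
Qed.

End Gen.


Section Path.
Variables (n k : nat).
Hypothesis hk : 1 <= k.

Definition dist (u v : nat) := (u - v) + (v - u).
Local Notation adj := (pathpow_adj n k).
Local Notation GG := (G adj).

Lemma adjC : symmetric adj.
Proof. by move=> i j; rewrite /pathpow_adj addnC. Qed.

Lemma inN (u v : 'I_n) : (v \in cnbhd adj u) = (dist u v <= k).
Proof.
rewrite inE /pathpow_adj /dist -(inj_eq val_inj) /=.
case: u v => [u hu] [v hv] /=.
case: (eqVneq v u) => [->|hne] /=; first by rewrite !subnn.
apply/idP/idP; first by case/andP.
move=> h; apply/andP; split => //; move/eqP: hne; lia.
Qed.

Definition dm (D : {set 'I_n}) (x : nat) := [exists w in D, dist w x <= k].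

Lemma domE D (v : 'I_n) : dominated adj D v = dm D v.
Proof. by apply: eq_existsb => w; rewrite inN. Qed.

Lemma dmU D (u : 'I_n) x : dm (u |: D) x = (dist u x <= k) || dm D x.
Proof.
apply/existsP/orP => [[w /andP[]]|[h|/existsP [w /andP[wD h]]]].
- by rewrite in_setU1 => /orP[/eqP ->|wD] h; [left|right; apply/existsP; exists w; rewrite wD].
- by exists u; rewrite setU11.
- by exists w; rewrite in_setU1 wD orbT.
Qed.

Lemma dom_all D : (forall x, x < n -> dm D x) -> dominatingb adj D.
Proof. by move=> H; apply/forallP => v; rewrite domE; apply: H. Qed.

Lemma gap e : forall (D : {set 'I_n}) a g y, g < 2 ^ e -> g <= k -> y <= n ->
  (forall x, x < y -> ~~ dm D x -> a <= x < a + g) ->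
  exists D', (forall x, x < y -> dm D' x) /\ GG D <= e + GG D'.
Proof.
elim: e => [|e IH] D a g y hg hgk hy H.
  exists D; split; last lia.
  move=> x hx; case E: (dm D x) => //; have := H x hx (negbT E).
  by rewrite expn0 in hg; lia.
case: (boolP [exists x : 'I_y, ~~ dm D x]) => [ex|nex]; last first.
  exists D; split; last lia.
  by move=> x hx; move/existsPn: nex => /(_ (Ordinal hx)) /negPn.
pose P x := (x < y) && ~~ dm D x.
have exP : exists x, P x by case/existsP: ex => x hx; exists x; rewrite /P ltn_ord.
have ubP : forall x, P x -> x <= y by move=> x /andP[h _]; lia.
case: (ex_minnP exP) => a' /andP[ha'y ha'] mina.
case: (ex_maxnP exP ubP) => b' /andP[hb'y hb'] maxb.
have ha := H a' ha'y ha'; have hb := H b' hb'y hb'.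
have hab : a' <= b' by apply: maxb; rewrite /P ha'y ha'.
have hh := divn_eq (b' - a') 2; have hm2 := ltn_pmod (b' - a') (isT : 0 < 2).
move: hh hm2; set h := (b' - a') %/ 2; set r := (b' - a') %% 2 => hh hm2.
rewrite expnS in hg; move: hg; set p := 2 ^ e => hg.
have hmn : a' + h < n by lia.
have hmdom : ~~ dm D (a' + h).
  apply/existsP => -[w /andP[wD hw]].
  case: (leqP (a' + h) w) => hmw.
  - by move: hb' => /existsP; apply; exists w; rewrite wD /dist; rewrite /dist in hw; lia.
  - by move: ha' => /existsP; apply; exists w; rewrite wD /dist; rewrite /dist in hw; lia.
have hmv : ~~ dominated adj D (Ordinal hmn) by rewrite domE.
have [u hu hG] := G_up adjC hmv.
rewrite inN /= /dist in hu.
have Hx : forall x, x < y -> ~~ dm (u |: D) x -> [/\ a' <= x, x <= b' & k < dist u x].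
  move=> x hx; rewrite dmU negb_or -ltnNge => /andP[h1 h2].
  have hPx : P x by rewrite /P hx h2.
  by split => //; [apply: mina | apply: maxb].
case: (leqP (a' + h) u) => hmu.
  have [|||D' [h1 h2]] := IH (u |: D) a' h y _ _ hy.
  - by rewrite -/p; lia.
  - lia.
  - by move=> x hx /(Hx x hx) [h1 h2]; rewrite /dist; lia.
  by exists D'; split => //; lia.
have [|||D' [h1 h2]] := IH (u |: D) (a' + h).+1 (b' - (a' + h)) y _ _ hy.
- by rewrite -/p; lia.
- lia.
- by move=> x hx /(Hx x hx) [h1 h2]; rewrite /dist; lia.
by exists D'; split => //; lia.
Qed.


Lemma GG_full D : (forall z, z < n -> dm D z) -> GG D = 0.
Proof. by move=> H; apply: G_dom; apply: dom_all. Qed.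

Lemma upper L (hL : k < 2 ^ L) r : forall (D : {set 'I_n}) x, n - x <= r -> x <= n ->
  (forall z, z < x -> dm D z) ->
  (2 * k + 2) * GG D <= (L + 2) * (n - x) + (2 * k + 2) * (L + 2).
Proof.
elim: r => [|r IH] D x hr hx H.
  by rewrite GG_full ?muln0 // => z hz; apply: H; lia.
case: (leqP n x) => hxn.
  by rewrite GG_full ?muln0 // => z hz; apply: H; lia.
case hdx: (dm D x).
  apply: leq_trans (IH D x.+1 _ _ _) _; [lia|lia| |].
    move=> z hz; case: (ltngtP z x) => [hzx|hzx|->]; [exact: H| lia| exact: hdx].
  by rewrite leq_add2r leq_mul2l; apply/orP; right; lia.
pose P z := [&& x <= z, z <= x + k, z < n & ~~ dm D z].
have exP : exists z, P z by exists x; rewrite /P leqnn hxn hdx /=; lia.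
have ubP : forall z, P z -> z <= n by move=> z /and4P[_ _ h _]; lia.
case: (ex_maxnP exP ubP) => v /and4P[hxv hvk hvn hv] maxv.
have hv' : ~~ dominated adj D (Ordinal hvn) by rewrite domE.
have [u hu hG] := G_up adjC hv'.
rewrite inN /= /dist in hu.
have hun : u < n by apply: ltn_ord.
set y := minn n (maxn (x + k + 1) (u + k + 1)).
set g := u - k - x.
have [e [he1 [he2 he3]]] : exists e, g < 2 ^ e /\ e <= L /\ (g = 0 /\ e = 0 \/ 0 < g).
  case: (posnP g) => hg; first by exists 0; rewrite hg; split => //; lia.
  by exists L; split; [lia|split; [lia|right]].
have [|||D' [hD' hG2]] := @gap e (u |: D) x g y he1 _ _.
- lia.
- lia.
- move=> z hz; rewrite dmU negb_or -ltnNge /dist => /andP[h1 h2].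
  case: (ltnP z x) => hzx; first by rewrite H in h2.
  case: (leqP z (x + k)) => hzk.
    have : z <= v by apply: maxv; rewrite /P hzx hzk h2 /=; lia.
    lia.
  lia.
case: (eqVneq y n) => hyn.
  rewrite (@GG_full D') in hG2; last by move=> z hz; apply: hD'; lia.
  have : (2 * k + 2) * GG D <= (2 * k + 2) * (L + 2).
    by rewrite leq_mul2l; apply/orP; right; lia.
  by move=> h; apply: leq_trans h _; apply: leq_addl.
have hIH := IH D' y ltac:(lia) ltac:(lia) hD'.
have h1 : (2 * k + 2) * GG D <= (2 * k + 2) * (1 + e) + (2 * k + 2) * GG D'.
  by rewrite -mulnDr leq_mul2l; apply/orP; right; lia.
have h2 : (L + 2) * (n - x) = (L + 2) * (n - y) + (L + 2) * (y - x).
  by rewrite -mulnDr; congr (_ * _); lia.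
have h3 : (2 * k + 2) * (1 + e) <= (L + 2) * (y - x).
  case: he3 => [[hg0 he0]|hg0].
    rewrite he0; apply: leq_trans (_ : (L + 2) * (k + 1) <= _).
      have h2L : 2 <= L + 2 by lia.
      by have := leq_mul h2L (leqnn (k + 1)); lia.
    by rewrite leq_mul2l; apply/orP; right; lia.
  apply: leq_trans (_ : (L + 2) * (2 * k + 2) <= _).
    by rewrite [X in _ <= X]mulnC leq_mul2l; apply/orP; right; lia.
  by rewrite leq_mul2l; apply/orP; right; lia.
lia.
Qed.


Lemma mono (i j : nat) : i < j -> 4 * k * i + 4 * k <= 4 * k * j.
Proof. by move=> h; rewrite addnC -mulnS leq_mul2l; apply/orP; right. Qed.

Lemma strat t (ht : 4 * k * t <= n) (a b : nat -> nat) v : v < n ->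
  (forall i, i < t -> 4 * k * i + k <= a i /\ b i <= 4 * k * i + 3 * k) ->
  exists u j A B, [/\ u < n, dist u v <= k,
   (forall i x, i < t -> i != j -> a i <= x < b i -> k < dist u x) &
   (j < t -> [/\ a j <= A, B <= b j, b j - a j <= 2 * (B - A) + 1 &
               forall x, A <= x < B -> k < dist u x])].
Proof.
move=> hv Hab.
have hq := divn_eq v (4 * k); have hp := ltn_pmod v (_ : 0 < 4 * k).
move: hq hp; set q := v %/ (4 * k); set p := v %% (4 * k); rewrite mulnC => hq hp.
have {}hp : p < 4 * k by apply: hp; lia.
rewrite /dist.
case: (ltnP q t) => hqt; last first.
  exists v, t, 0, 0; split => //; first lia.
    move=> i x hi _ hx; have := mono (_ : i < q); have := Hab i hi; lia.
  lia.
have [hqa hqb] := Hab q hqt.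
have hKn : 4 * k * q + 4 * k <= n by have := mono hqt; lia.
have oth : forall u, 4 * k * q <= u < 4 * k * q + 4 * k ->
    forall i x, i < t -> i != q -> a i <= x < b i -> k < (u - x) + (x - u).
  move=> u hu i x hi hiq hx; have [hai hbi] := Hab i hi.
  case: (ltngtP i q) => hiq'; last by rewrite hiq' eqxx in hiq.
    by have := mono hiq'; lia.
  by have := mono hiq'; lia.
case: (ltnP p k) => hpk.
  exists (4 * k * q), q, (maxn (a q) (4 * k * q + k + 1)), (b q); split; first lia.
  - lia.
  - by apply: oth; lia.
  - by move=> _; split; lia.
case: (leqP (3 * k) p) => hp3.
  exists (4 * k * q + 4 * k - 1), q, (a q), (minn (b q) (4 * k * q + 3 * k - 1)); split.
  - lia.
  - lia.
  - by apply: oth; lia.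
  - by move=> _; split; lia.
case: (leqP (minn (b q) v - a q) (b q - maxn (a q) v.+1)) => hs.
  exists (v - k), q, (maxn (a q) v.+1), (b q); split.
  - lia.
  - lia.
  - by apply: oth; lia.
  - by move=> _; split; lia.
exists (v + k), q, (a q), (minn (b q) v); split.
- lia.
- lia.
- by apply: oth; lia.
- by move=> _; split; lia.
Qed.


Lemma sum_step t (e : nat -> nat) (j : nat) :
  \sum_(i < t) e i <= \sum_(i < t) (if (i : nat) == j then (e i).-1 else e i) + 1.
Proof.
case: (ltnP j t) => hj.
  rewrite (bigD1 (Ordinal hj)) //= [X in _ <= X + _](bigD1 (Ordinal hj)) //= eqxx.
  rewrite (eq_bigr (fun i : 'I_t => if (i : nat) == j then (e i).-1 else e i)); first lia.
  move=> i hi; rewrite (_ : (i == j :> nat) = false) //.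
  by apply/negbTE; move: hi; apply: contra => /eqP h; apply/eqP/val_inj.
apply: leq_trans (leq_addr 1 _); rewrite leq_eqVlt; apply/orP; left; apply/eqP.
apply: eq_bigr => i _; rewrite (_ : (i == j :> nat) = false) //.
by apply/negbTE; rewrite neq_ltn; apply/orP; left; apply: leq_trans (ltn_ord i) hj.
Qed.

Lemma pre t (ht : 4 * k * t <= n) (D : {set 'I_n}) (a b e : nat -> nat) :
  (forall i, i < t -> [/\ 4 * k * i + k <= a i, b i <= 4 * k * i + 3 * k,
       2 ^ e i <= 2 * (b i - a i) + 1 & forall x, a i <= x < b i -> ~~ dm D x]) ->
  \sum_(i < t) e i = 0 \/ ~~ dominatingb adj D.
Proof.
move=> H.
case: (boolP [forall i : 'I_t, e i == 0]) => [/forallP h0 | /forallPn [i0 hi0]].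
  by left; rewrite big1 // => i _; apply/eqP/h0.
right; have [h1 h2 h3 h4] := H i0 (ltn_ord i0).
have he : 2 <= 2 ^ e i0 by rewrite -{1}(expn1 2) leq_exp2l // lt0n.
have := mono (ltn_ord i0) => hm.
have han : a i0 < n by lia.
apply/forallPn; exists (Ordinal han); rewrite domE; apply: h4; rewrite /=; lia.
Qed.

Lemma lower t (ht : 4 * k * t <= n) s : forall (D : {set 'I_n}) (a b e : nat -> nat),
  #|~: D| <= s ->
  (forall i, i < t -> [/\ 4 * k * i + k <= a i, b i <= 4 * k * i + 3 * k,
       2 ^ e i <= 2 * (b i - a i) + 1 & forall x, a i <= x < b i -> ~~ dm D x]) ->
  \sum_(i < t) e i <= GG D.
Proof.
elim: s => [|s IH] D a b e hs H; case: (pre ht H) => [->|nd] //.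
  have h0 : #|~: D| = 0 by lia.
  by rewrite dominating_full in nd.
apply: (G_low adjC nd) => v nv.
have Hab : forall i, i < t -> 4 * k * i + k <= a i /\ b i <= 4 * k * i + 3 * k.
  by move=> i hi; have [? ? _ _] := H i hi.
have [u [j [A [B [hun hud hoth hj]]]]] := strat ht (ltn_ord v) Hab.
have hin : Ordinal hun \in cnbhd adj v by rewrite inN /dist /=; rewrite /dist in hud; lia.
exists (Ordinal hun) => //.
have hc := card_step (notin_D adjC nv hin).
apply: leq_trans (@sum_step t e j) _; rewrite addn1 ltnS.
apply: (IH _ (fun i => if i == j then A else a i) (fun i => if i == j then B else b i) (fun i => if i == j then (e i).-1 else e i)).
  by move: hs; rewrite hc ltnS.
move=> i hi; have [h1 h2 h3 h4] := H i hi.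
case: eqP => [hij|hij].
  subst i; have [hA hB hs' hx] := hj hi; split; try lia.
    case E: (e j) => [|e']; first by rewrite expn0; lia.
    by rewrite E expnS in h3; rewrite /=; lia.
  move=> x hx'; rewrite dmU negb_or -ltnNge; apply/andP; split; first exact: hx.
  by apply: h4; lia.
split => // x hx; rewrite dmU negb_or -ltnNge; apply/andP; split; last exact: h4.
exact: (hoth i x hi (introN eqP hij) hx).
Qed.

End Path.

Unset Implicit Arguments.
Import Order.TTheory GRing.Theory Num.Theory.

Theorem theorem6p1 (n k : nat) (hk : 2 <= k) (hkn : k <= n) :
  ((up_log 2 k.+1).+1 * (n %/ (4 * k)) <= gamma_i 'I_n (pathpow_adj n k))%N /\
  (((gamma_i 'I_n (pathpow_adj n k))%:R : rat) <=
    ((up_log 2 k.+1 + 2)%:R / (2 * k + 2)%:R) * n%:R + (up_log 2 k.+1 + 2)%:R)%R.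
Proof.
have hk1 : (1 <= k)%N by lia.
have hL1 : (k.+1 <= 2 ^ up_log 2 k.+1)%N by apply: up_logP.
have hL2 : (2 ^ (up_log 2 k.+1).-1 < k.+1)%N by apply: up_log_gtn => //; lia.
have hL0 : (0 < up_log 2 k.+1)%N by rewrite up_log_gt0; apply/andP; split => //; lia.
move: hL1 hL2 hL0; set L := up_log 2 k.+1 => hL1 hL2 hL0.
change (gamma_i 'I_n (pathpow_adj n k)) with (G (pathpow_adj n k) set0).
have dm0 : forall x, ~~ dm k (set0 : {set 'I_n}) x.
  by move=> x; apply/existsP => -[w]; rewrite inE.
split.
  set t := n %/ (4 * k).
  have ht : (4 * k * t <= n)%N by rewrite mulnC leq_divM.
  have hpow : (2 ^ L.+1 <= 2 * (4 * k * 0 + 3 * k - (4 * k * 0 + k)) + 1)%N.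
    have : (2 ^ L = 2 * 2 ^ L.-1)%N by rewrite -expnS prednK.
    rewrite expnS; lia.
  have := @lower n k hk1 t ht #|~: (set0 : {set 'I_n})| set0
     (fun i => 4 * k * i + k)%N (fun i => 4 * k * i + 3 * k)%N (fun _ => L.+1) (leqnn _).
  move=> /(_ _) h; apply: leq_trans (h _); first by rewrite sum_nat_const card_ord mulnC.
  move=> i hi; split => //; try (by move=> x _; apply: dm0).
  have : (4 * k * i + 3 * k - (4 * k * i + k) = 4 * k * 0 + 3 * k - (4 * k * 0 + k))%N by lia.
  by move=> ->.
have := @upper n k hk1 L ltac:(lia) n set0 0 ltac:(lia) (leq0n _).
move=> /(_ (fun z hz => ltac:(lia))); rewrite subn0 => h.
set g := G _ _ in h *.
have hr : ((2 * k + 2)%:R * g%:R <= (L + 2)%:R * n%:R + (2 * k + 2)%:R * (L + 2)%:R :> rat)%R.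
  by rewrite -!natrM -natrD ler_nat.
have hpos : (0 < (2 * k + 2)%:R :> rat)%R by rewrite ltr0n; lia.
have -> : (((L + 2)%:R / (2 * k + 2)%:R) * n%:R + (L + 2)%:R =
           ((L + 2)%:R * n%:R + (2 * k + 2)%:R * (L + 2)%:R) / (2 * k + 2)%:R :> rat)%R.
  field; have h0 : (0 <= k%:R :> rat)%R by rewrite ler0n.
  by rewrite lt0r_neq0 //; lra.
by rewrite (ler_pdivlMr _ _ hpos) mulrC.
Qed.
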